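(* In the high-dimensional setting below, assume $\epsilon_{I,j}\ne0$ for all $j$, that for some $c>1$ $$\lambda\gamma\ge\frac{c+1}{c-1}\max_{j\in[p]}\frac{\|(X^{(n)}_{I,j^c})^\top\epsilon_{I,j}\|_\infty}{\|\epsilon_{I,j}\|_2}\quad\text{and}\quad\lambda\ge\frac{c+1}{c-1}\max_{i\in[n]}\Big(\sum_{j\in[p]}\frac{\epsilon_{ij}^2}{\|\epsilon_{I,j}\|_2^2}\Big)^{1/2},$$ and that there is $V\in\mathbb R^{n\times p}$ with $\|V_{i,\bullet}\|_2\le1$ for all $i$ such that for every $j\in[p]$ $$\|M\widehat\Delta_{\bullet,j}\|_2^2\le-2\bar\xi_{\bullet,j}^\top M\widehat\Delta_{\bullet,j}-2\lambda\|\bar\xi_{\bullet,j}\|_2V_{\bullet,j}^\top\widehat\Delta^\Theta_{\bullet,j}+2\lambda\gamma\|\bar\xi_{\bullet,j}\|_2\big(\|B^*_{j^c,j}\|_1-\|\widehat B_{j^c,j}\|_1\big)+\lambda^2\big(\gamma\|\widehat\Delta^B_{\bullet,j}\|_1+|V_{\bullet,j}^\top\widehat\Delta^\Theta_{\bullet,j}|\big)^2.$$ Then $$\|M\widehat\Delta\|_F^2\le4\lambda c\|\xi_{I,\bullet}^\top\|_{2,\infty}\big(\gamma\|\widehat\Delta^B_{\mathcal J}\|_{1,1}+\|\widehat\Delta^\Theta_{O,\bullet}\|_{2,1}\big)+\lambda^2(1+c)^2\big(\gamma\|\widehat\Delta^B_{\mathcal J}\|_{1,1}+\|\widehat\Del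ta^\Theta_{O,\bullet}\|_{2,1}\big)^2.$$
   Context: High-dimensional setting. Let $n,p\ge1$, $[n]=\{1,\dots,n\}$. $X=Y+E^*\in\mathbb R^{n\times p}$ where (C1) the rows of $Y$ are independent $\mathcal N_p(\mu^*,\Sigma^* )$, $\Sigma^*$ positive definite; (C2) $E^*$ is deterministic, $[n]=I\cup O$ a partition with the rows of $E^*$ indexed by $I$ equal to zero, and every row of $E^*(\Sigma^* )^{-1/2}$ of Euclidean norm at most $M_E\sqrt p$; $\mu^*=0$. $\Omega^*=(\Sigma^* )^{-1}$ with diagonal entries $\omega^*_{jj}$, $B^*=\Omega^*\mathrm{diag}(\Omega^* )^{-1}$, $X^{(n)}=X/\sqrt n$, $\Theta^*=E^*B^*/\sqrt n$, $\xi=X^{(n)}B^*-\Theta^*$, $\epsilon_{ij}=\sqrt n(\omega^*_{jj})^{1/2}\xi_{ij}$. Notation: $A_{i,\bullet}$, $A_{\bullet,j}$ rows/columns, $A_{K,J}$ submatrices, $j^c=[p]\setminus\{j\}$, $\|A\|_{q_1,q_2}=(\sum_i\|A_{i,\bullet}\|_{q_1}^{q_2})^{1/q_2}$, $\|A^\top\|_{2,1}=\sum_j\|A_{\bullet,j}\|_2$, $\|A^\top\|_{2,\infty}=\max_j\|A_{\bullet,j}\|_2$, $\|A\|_F=\|A\|_{2,2}$. Estimator: for $\lambda,\gamma\ge0$, $(\widehat B,\widehat\Theta)$ minimizes $F(B,\Theta)=\|(X^{(n)}B-\Theta)^\top\|_{2,1}+\lambda(\|\Theta\|_{2,1}+\gamma\|B\|_{1,1})$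 over $B\in\mathbb R^{p\times p}$ with all $B_{jj}=1$ and $\Theta\in\mathbb R^{n\times p}$. Let $\mathcal J=\{J_j:j\in[p]\}$, $J_j\subset[p]$, with $B^*_{i,j}=0$ whenever $i\notin J_j$; for a $p\times p$ matrix $A$, $A_{\mathcal J}$ zeroes entries $A_{i,j}$ with $i\notin J_j$. $\xi_O$ is the $n\times p$ matrix equal to $\xi$ on rows indexed by $O$ and zero elsewhere; $\bar\xi=\xi-\xi_O$; $\bar\Theta^*=\Theta^*+\xi_O$. $\widehat\Delta^B=\widehat B-B^*$, $\widehat\Delta^\Theta=\widehat\Theta-\bar\Theta^*$, $\widehat\Delta\in\mathbb R^{(p+n)\times p}$ stacks $\widehat\Delta^B$ above $\widehat\Delta^\Theta$; $M=[X^{(n)},\,-I_n]\in\mathbb R^{n\times(p+n)}$. *)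

(* Defs.v *)
From HB Require Import structures.
From mathcomp Require Import all_boot all_order all_algebra.
Set Implicit Arguments. Unset Strict Implicit. Unset Printing Implicit Defensive.
Import Order.TTheory GRing.Theory Num.Theory.
Local Open Scope ring_scope.

Section Defs.
Variable R : rcfType.

Definition scaledX n p (X : 'M[R]_(n, p)) : 'M[R]_(n, p) :=
  (Num.sqrt (n%:R))^-1 *: X.

Definition OmegaS p (Sigma : 'M[R]_p) : 'M[R]_p := invmx Sigma.

Definition Bstar p (Sigma : 'M[R]_p) : 'M[R]_p :=
  OmegaS Sigma *m diag_mx (\row_j ((OmegaS Sigma) j j)^-1).

Definition ThetaStar n p (E : 'M[R]_(n, p)) (Sigma : 'M[R]_p) : 'M[R]_(n, p) :=
  (Num.sqrt (n%:R))^-1 *: (E *m Bstar Sigma).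

Definition xi n p (X E : 'M[R]_(n, p)) (Sigma : 'M[R]_p) : 'M[R]_(n, p) :=
  scaledX X *m Bstar Sigma - ThetaStar E Sigma.

Definition epsM n p (X E : 'M[R]_(n, p)) (Sigma : 'M[R]_p) : 'M[R]_(n, p) :=
  \matrix_(i, j) (Num.sqrt (n%:R) * Num.sqrt ((OmegaS Sigma) j j) * xi X E Sigma i j).

(* xi_O : xi on rows in O = ~: I, zero elsewhere *)
Definition xiO n p (I : {set 'I_n}) (X E : 'M[R]_(n, p)) (Sigma : 'M[R]_p)
  : 'M[R]_(n, p) :=
  \matrix_(i, j) (if i \in ~: I then xi X E Sigma i j else 0).

Definition xibar n p (I : {set 'I_n}) (X E : 'M[R]_(n, p)) (Sigma : 'M[R]_p) :=
  xi X E Sigma - xiO I X E Sigma.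

Definition ThetaBar n p (I : {set 'I_n}) (X E : 'M[R]_(n, p)) (Sigma : 'M[R]_p) :=
  ThetaStar E Sigma + xiO I X E Sigma.

Definition Mmat n p (X : 'M[R]_(n, p)) : 'M[R]_(n, p + n) :=
  row_mx (scaledX X) (- 1%:M).

Definition colnorm2_on m p (K : {set 'I_m}) (A : 'M[R]_(m, p)) (j : 'I_p) : R :=
  Num.sqrt (\sum_(i in K) A i j ^+ 2).
Definition colnorm2 m p (A : 'M[R]_(m, p)) (j : 'I_p) : R :=
  Num.sqrt (\sum_i A i j ^+ 2).
Definition rownorm2 m p (A : 'M[R]_(m, p)) (i : 'I_m) : R :=
  Num.sqrt (\sum_j A i j ^+ 2).
Definition colnorm1 m p (A : 'M[R]_(m, p)) (j : 'I_p) : R :=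
  \sum_i `|A i j|.
Definition norm21T m p (A : 'M[R]_(m, p)) : R := \sum_j colnorm2 A j.
Definition norm21 m p (A : 'M[R]_(m, p)) : R := \sum_i rownorm2 A i.
Definition norm11 m p (A : 'M[R]_(m, p)) : R := \sum_i \sum_j `|A i j|.
Definition normF m p (A : 'M[R]_(m, p)) : R := Num.sqrt (\sum_i \sum_j A i j ^+ 2).

Definition Fobj n p (X : 'M[R]_(n, p)) (lambda gamma : R)
  (B : 'M[R]_p) (Theta : 'M[R]_(n, p)) : R :=
  norm21T (scaledX X *m B - Theta) + lambda * (norm21 Theta + gamma * norm11 B).

Definition restrJ p (J : 'I_p -> {set 'I_p}) (A : 'M[R]_p) : 'M[R]_p :=
  \matrix_(k, j) (if k \in J j then A k j else 0).

Definition restrRows m p (K : {set 'I_m}) (A : 'M[R]_(m, p)) : 'M[R]_(m, p) :=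
  \matrix_(i, j) (if i \in K then A i j else 0).

End Defs.

(* Main.v *)
Require Import Defs.
From HB Require Import structures.
From mathcomp Require Import all_boot all_order all_algebra.
From mathcomp Require Import ring lra.
Set Implicit Arguments. Unset Strict Implicit. Unset Printing Implicit Defensive.
Import Order.TTheory GRing.Theory Num.Theory.
Local Open Scope ring_scope.
Lemma sum_sq_expand (R : rcfType) (T : finType) (a b : T -> R) (t : R) :
  \sum_i (t * a i - b i) ^+ 2 =
  t ^+ 2 * \sum_i a i ^+ 2 - 2 * t * \sum_i a i * b i + \sum_i b i ^+ 2.
Proof.
rewrite !mulr_sumr -sumrB -big_split /=; apply: eq_bigr => i _; ring.
Qed.

Lemma cs_sq (R : rcfType) (T : finType) (a b : T -> R) :
  (\sum_i a i * b i) ^+ 2 <= (\sum_i a i ^+ 2) * (\sum_i b i ^+ 2).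
Proof.
set A := \sum_i a i ^+ 2; set B := \sum_i b i ^+ 2; set D := \sum_i a i * b i.
have A0 : 0 <= A by apply: sumr_ge0 => i _; exact: sqr_ge0.
have B0 : 0 <= B by apply: sumr_ge0 => i _; exact: sqr_ge0.
case: (eqVneq A 0) => [A00|Anz].
  have a0 : forall i, a i = 0.
    move=> i; apply/eqP; rewrite -sqrf_eq0; apply/eqP.
    by move/eqP: A00; rewrite psumr_eq0 => [/allP H|j _]; [apply/eqP; apply: H; rewrite mem_index_enum | exact: sqr_ge0].
  have -> : D = 0 by rewrite /D big1 // => i _; rewrite a0 mul0r.
  by rewrite A00 expr0n mul0r.
have Ap : 0 < A by rewrite lt_def Anz A0.
have H : 0 <= \sum_i (D / A * a i - b i) ^+ 2 by apply: sumr_ge0 => i _; exact: sqr_ge0.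
rewrite (sum_sq_expand a b (D / A)) -/A -/B -/D in H.
have E : (D / A) ^+ 2 * A - 2 * (D / A) * D + B = B - D ^+ 2 / A by field.
rewrite E in H.
rewrite subr_ge0 ler_pdivrMr // in H.
by rewrite mulrC.
Qed.

Lemma cs (R : rcfType) (T : finType) (a b : T -> R) :
  \sum_i a i * b i <= Num.sqrt (\sum_i a i ^+ 2) * Num.sqrt (\sum_i b i ^+ 2).
Proof.
have A0 : 0 <= \sum_i a i ^+ 2 by apply: sumr_ge0 => i _; exact: sqr_ge0.
rewrite -sqrtrM // (le_trans (ler_norm _)) // -sqrtr_sqr ler_sqrt ?cs_sq //.
by apply: mulr_ge0 => //; apply: sumr_ge0 => i _; exact: sqr_ge0.
Qed.

Lemma sumsq_ge0 (R : rcfType) (T : finType) (a : T -> R) : 0 <= \sum_i a i ^+ 2.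
Proof. by apply: sumr_ge0 => i _; exact: sqr_ge0. Qed.

Lemma cs_abs (R : rcfType) (T : finType) (a b : T -> R) :
  \sum_i `|a i| * `|b i| <= Num.sqrt (\sum_i a i ^+ 2) * Num.sqrt (\sum_i b i ^+ 2).
Proof.
have := cs (fun i => `|a i|) (fun i => `|b i|).
by rewrite (eq_bigr _ (fun i _ => real_normK (num_real (a i))))
           (eq_bigr (fun i => b i ^+ 2) (fun i _ => real_normK (num_real (b i)))).
Qed.

Lemma tri (R : rcfType) (T : finType) (a b : T -> R) :
  Num.sqrt (\sum_i (a i + b i) ^+ 2) <=
  Num.sqrt (\sum_i a i ^+ 2) + Num.sqrt (\sum_i b i ^+ 2).
Proof.
set sA := Num.sqrt (\sum_i a i ^+ 2); set sB := Num.sqrt (\sum_i b i ^+ 2).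
have hA : sA ^+ 2 = \sum_i a i ^+ 2 by rewrite sqr_sqrtr //; apply: sumsq_ge0.
have hB : sB ^+ 2 = \sum_i b i ^+ 2 by rewrite sqr_sqrtr //; apply: sumsq_ge0.
have E : \sum_i (a i + b i) ^+ 2 = \sum_i a i ^+ 2 + 2 * \sum_i a i * b i + \sum_i b i ^+ 2.
  by rewrite mulr_sumr -!big_split /=; apply: eq_bigr => i _; ring.
have C := cs a b.
have hAB : 0 <= sA + sB by rewrite addr_ge0 // sqrtr_ge0.
rewrite -(ger0_norm hAB) -sqrtr_sqr ler_sqrt ?sqr_ge0 // E -hA -hB.
rewrite -/sA -/sB in C.
nra.
Qed.

Lemma lowb (R : rcfType) (T : finType) (x y : T -> R) :
  0 < Num.sqrt (\sum_i x i ^+ 2) ->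
  Num.sqrt (\sum_i x i ^+ 2) + (\sum_i x i * y i) / Num.sqrt (\sum_i x i ^+ 2)
  <= Num.sqrt (\sum_i (x i + y i) ^+ 2).
Proof.
set s := Num.sqrt _ => s0.
have hs : s ^+ 2 = \sum_i x i ^+ 2 by rewrite sqr_sqrtr //; apply: sumsq_ge0.
have C := cs x (fun i => x i + y i).
have E : \sum_i x i * (x i + y i) = \sum_i x i ^+ 2 + \sum_i x i * y i.
  by rewrite -big_split /=; apply: eq_bigr => i _; ring.
rewrite E -/s in C.
rewrite -(ler_pM2r s0) mulrDl mulfVK ?gt_eqF //.
by rewrite -expr2 hs mulrC.
Qed.

Lemma sumsq_le_sqsum (R : rcfType) (T : finType) (a : T -> R) :
  (forall i, 0 <= a i) -> \sum_i a i ^+ 2 <= (\sum_i a i) ^+ 2.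
Proof.
move=> a0; rewrite expr2 mulr_suml; apply: ler_sum => i _.
rewrite expr2 ler_wpM2l // (bigD1 i) //= lerDl.
by apply: sumr_ge0 => j _.
Qed.

Lemma sq_mono (R : rcfType) (x y : R) : 0 <= x -> x <= y -> x ^+ 2 <= y ^+ 2.
Proof. move=> x0 xy; nra. Qed.

Lemma final_arith (R : rcfType) (ka la ga m c Pb Qb wI wO SX SU SQ : R) :
  0 < ka -> 0 <= la -> 0 <= ga -> 0 <= m -> 0 <= Pb -> 0 <= Qb -> 0 <= wI ->
  0 <= wO -> 1 < c -> ka * (c + 1) = c - 1 ->
  ga * Qb + wI <= c * (ga * Pb + wO) ->
  SX <= ka * la * m * wI -> SU <= wI + wO ->
  SQ <= (ga * (Pb + Qb) + (wI + wO)) ^+ 2 ->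
  2 * ka * la * ga * m * (Pb + Qb) + 2 * SX + 2 * la * m * SU + 2 * la * ga * m * Pb
   + la ^+ 2 * SQ <=
  4 * la * c * m * (ga * Pb + wO) + la ^+ 2 * (1 + c) ^+ 2 * (ga * Pb + wO) ^+ 2.
Proof.
move=> ka0 la0 ga0 m0 Pb0 Qb0 wI0 wO0 c1 kaE cone hX hU hQ.
set P := ga * Pb + wO; set Q := ga * Qb + wI.
have P0 : 0 <= P by rewrite addr_ge0 ?mulr_ge0.
have gQ : 0 <= ga * Qb by rewrite mulr_ge0.
have gP : 0 <= ga * Pb by rewrite mulr_ge0.
have kw : 0 <= ka * wO by rewrite mulr_ge0 // ltW.
have L1 : ka * (ga * Pb + ga * Qb + wI) + wI + wO + ga * Pb <= (1 + ka) * (P + Q).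
  rewrite /P /Q; lra.
have e2 : (1 + ka) * (1 + c) = 2 * c by lra.
have L2 : (1 + ka) * (P + Q) <= 2 * c * P.
  rewrite -e2 -mulrA; apply: ler_wpM2l; first by lra.
  rewrite /P /Q in cone *; lra.
have lm0 : 0 <= la * m by rewrite mulr_ge0.
have L3 := ler_wpM2l lm0 (le_trans L1 L2).
have Q2 : (P + Q) ^+ 2 <= ((1 + c) * P) ^+ 2.
  apply: sq_mono; first by rewrite addr_ge0 // addr_ge0.
  rewrite /P /Q in cone *; lra.
have sQ : ga * (Pb + Qb) + (wI + wO) = P + Q by rewrite /P /Q; ring.
rewrite sQ in hQ.
have Q3 := ler_wpM2l (sqr_ge0 la) (le_trans hQ Q2).
have U2 := ler_wpM2l lm0 hU.
have X2 := ler_wpM2l (ler0n R 2) hX.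
rewrite exprMn in Q3.
move: Q3 U2 L3 X2; rewrite /P /Q; lra.
Qed.
Lemma emul (R : rcfType) p q (A : 'M[R]_(p, q)) (j : 'I_p) k :
  (delta_mx (0 : 'I_1) j *m A) 0 k = A j k.
Proof.
rewrite mxE (bigD1 j) //= mxE !eqxx mul1r big1 ?addr0 // => i /negbTE ne.
by rewrite mxE ne andbF mul0r.
Qed.

Lemma omega_pos (R : rcfType) p (Sigma : 'M[R]_p) :
  Sigma^T = Sigma ->
  (forall x : 'rV[R]_p, x != 0 -> 0 < (x *m Sigma *m x^T) 0 0) ->
  forall j, 0 < OmegaS Sigma j j.
Proof.
move=> Hs Hpd j.
have Su : Sigma \in unitmx.
  rewrite unitmxE unitfE; apply/negP => /det0P [v vnz vS].
  by have := Hpd v vnz; rewrite vS mul0mx mxE ltxx.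
set O := OmegaS Sigma.
have OT : O^T = O by rewrite /O /OmegaS trmx_inv Hs.
set y : 'rV[R]_p := delta_mx 0 j *m O.
have yS : y *m Sigma = delta_mx 0 j by rewrite /y -mulmxA mulVmx // mulmx1.
have ynz : y != 0.
  apply/negP => /eqP y0; move: yS; rewrite y0 mul0mx => /matrixP/(_ 0 j).
  by rewrite !mxE !eqxx /= => /eqP; rewrite eq_sym oner_eq0.
have := Hpd y ynz; rewrite yS emul mxE /y emul.
by [].
Qed.

Lemma bstar_diag (R : rcfType) p (Sigma : 'M[R]_p) :
  Sigma^T = Sigma ->
  (forall x : 'rV[R]_p, x != 0 -> 0 < (x *m Sigma *m x^T) 0 0) ->
  forall j, Bstar Sigma j j = 1.
Proof.
move=> Hs Hpd j; rewrite /Bstar mul_mx_diag !mxE mulfV //.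
by rewrite gt_eqF // omega_pos.
Qed.
Theorem mainTheorem18
  (R : rcfType) (n p : nat) (Hn : (0 < n)%N) (Hp : (0 < p)%N)
  (X E : 'M[R]_(n, p)) (Sigma : 'M[R]_p) (I : {set 'I_n}) (ME : R)
  (* (C1): Sigma* symmetric positive definite *)
  (HSsym : Sigma^T = Sigma)
  (HSpd : forall x : 'rV[R]_p, x != 0 -> 0 < (x *m Sigma *m x^T) 0 0)
  (* (C2): rows of E* indexed by I vanish; ||E*_i Sigma^{-1/2}||_2 <= M_E sqrt p,
     written as E*_i Omega* E*_i^T <= M_E^2 p *)
  (HEI : forall i j, i \in I -> E i j = 0)
  (HME0 : 0 <= ME)
  (HME : forall i : 'I_n,
     (row i E *m OmegaS Sigma *m (row i E)^T) 0 0 <= ME ^+ 2 * p%:R)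
  (* the support sets J_j of B* *)
  (J : 'I_p -> {set 'I_p})
  (HJ : forall k j, k \notin J j -> Bstar Sigma k j = 0)
  (* the estimator *)
  (lambda gamma c : R) (Hl0 : 0 <= lambda) (Hg0 : 0 <= gamma)
  (Bh : 'M[R]_p) (Th : 'M[R]_(n, p))
  (HBdiag : forall j, Bh j j = 1)
  (Hmin : forall (B : 'M[R]_p) (T : 'M[R]_(n, p)), (forall j, B j j = 1) ->
     Fobj X lambda gamma Bh Th <= Fobj X lambda gamma B T)
  (* assumptions of the theorem *)
  (Heps : forall j, exists2 i, i \in I & epsM X E Sigma i j != 0)
  (Hc : 1 < c)
  (Hlg : forall j k : 'I_p, k != j ->
     (c + 1) / (c - 1) *
       (`|\sum_(i in I) scaledX X i k * epsM X E Sigma i j|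
          / colnorm2_on I (epsM X E Sigma) j)
     <= lambda * gamma)
  (Hlam : forall i : 'I_n,
     (c + 1) / (c - 1) *
       Num.sqrt (\sum_j (epsM X E Sigma i j ^+ 2
                          / colnorm2_on I (epsM X E Sigma) j ^+ 2))
     <= lambda)
  (HV : let DB := Bh - Bstar Sigma in
        let DT := Th - ThetaBar I X E Sigma in
        let MD := Mmat X *m col_mx DB DT in
        let xb := xibar I X E Sigma in
        exists V : 'M[R]_(n, p),
          (forall i, rownorm2 V i <= 1) /\
          (forall j : 'I_p,
             colnorm2 MD j ^+ 2 <=
               - 2 * (\sum_i xb i j * MD i j)
               - 2 * lambda * colnorm2 xb j * (\sum_i V i j * DT i j)
               + 2 * lambda * gamma * colnorm2 xb j *
                   ((\sum_(k | k != j) `|Bstar Sigma k j|)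
                    - (\sum_(k | k != j) `|Bh k j|))
               + lambda ^+ 2 * (gamma * colnorm1 DB j
                                + `|\sum_i V i j * DT i j|) ^+ 2)) :
  let DB := Bh - Bstar Sigma in
  let DT := Th - ThetaBar I X E Sigma in
  let MD := Mmat X *m col_mx DB DT in
  let xiI2inf := \big[Num.max/0]_(j < p) colnorm2_on I (xi X E Sigma) j in
  let S := gamma * norm11 (restrJ J DB) + norm21 (restrRows (~: I) DT) in
  normF MD ^+ 2 <=
    4 * lambda * c * xiI2inf * S + lambda ^+ 2 * (1 + c) ^+ 2 * S ^+ 2.
Proof.
cbv zeta in HV |- *.
have [V [HVn HVj]] := HV.
set DB := Bh - Bstar Sigma in HVj *.
set DT := Th - ThetaBar I X E Sigma in HVj *.
set MD := Mmat X *m col_mx DB DT in HVj *.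
set xb := xibar I X E Sigma in HVj *.
set m := \big[Num.max/0]_(j < p) colnorm2_on I (xi X E Sigma) j.
set Pb := norm11 (restrJ J DB).
set wO := norm21 (restrRows (~: I) DT).
set Om := OmegaS Sigma.
have Opos : forall j, 0 < Om j j := omega_pos HSsym HSpd.
have Bd : forall j, Bstar Sigma j j = 1 := bstar_diag HSsym HSpd.
have DBd : forall j, DB j j = 0.
  by move=> j; rewrite /DB [LHS]mxE [X in _ + X]mxE Bd HBdiag subrr.
set Xs := scaledX X.
set xiM := xi X E Sigma.
pose al j := Num.sqrt (n%:R) * Num.sqrt (Om j j).
have alpos : forall j, 0 < al j.
  by move=> j; rewrite /al mulr_gt0 // sqrtr_gt0 ?ltr0n // Opos.
have epsE : forall i j, epsM X E Sigma i j = al j * xiM i j by move=> i j; rewrite mxE.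
have xbE : forall i j, xb i j = if i \in I then xiM i j else 0.
  move=> i j; rewrite /xb /xibar /xiO [LHS]mxE [X in _ + X]mxE [X in - X]mxE in_setC.
  by case: (i \in I) => /=; rewrite ?subr0 ?subrr.
pose s j := colnorm2 xb j.
have sE : forall j, s j = colnorm2_on I xiM j.
  move=> j; rewrite /s /colnorm2 /colnorm2_on [in RHS]big_mkcond /=; congr Num.sqrt.
  by apply: eq_bigr => i _; rewrite xbE; case: (i \in I); rewrite // expr0n.
have epsN : forall j, colnorm2_on I (epsM X E Sigma) j = al j * s j.
  move=> j; rewrite /colnorm2_on (eq_bigr (fun i => al j ^+ 2 * xiM i j ^+ 2)) => [|i _]; last first.
    by rewrite epsE exprMn.
  by rewrite -mulr_sumr sqrtrM ?sqr_ge0 // sqrtr_sqr ger0_norm ?(ltW (alpos j)) // sE.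
have spos : forall j, 0 < s j.
  move=> j; have [i iI ne] := Heps j.
  have : 0 < colnorm2_on I (epsM X E Sigma) j.
    rewrite sqrtr_gt0 (bigD1 i) //=.
    have h1 : 0 < epsM X E Sigma i j ^+ 2 by rewrite lt_def sqr_ge0 andbT sqrf_eq0.
    have h2 : 0 <= \sum_(i0 in I | i0 != i) epsM X E Sigma i0 j ^+ 2.
      by apply: sumr_ge0 => k _; exact: sqr_ge0.
    lra.
  by rewrite epsN pmulr_rgt0.
have sm : forall j, s j <= m by move=> j; rewrite sE; exact: le_bigmax.
pose j0 : 'I_p := Ordinal Hp.
have m0 : 0 <= m by apply: le_trans (ltW (spos j0)) (sm j0).
set ka := (c - 1) / (c + 1).
have c1 : c - 1 != 0 by rewrite subr_eq0 gt_eqF.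
have c2 : c + 1 != 0 by apply: lt0r_neq0; lra.
have ka0 : 0 < ka by rewrite /ka divr_gt0 //; lra.
have Glg : forall j k, k != j -> `|\sum_i xb i j * Xs i k| <= ka * (lambda * gamma) * s j.
  move=> j k kj; have H := Hlg j k kj.
  have E1 : \sum_(i in I) Xs i k * epsM X E Sigma i j = al j * \sum_i xb i j * Xs i k.
    rewrite mulr_sumr [LHS]big_mkcond; apply: eq_bigr => i _; rewrite xbE epsE.
    by case: (i \in I); ring.
  rewrite E1 epsN normrM (gtr0_norm (alpos j)) in H.
  move: H; set T := `|_|; move=> H.
  have alnz : al j != 0 by rewrite gt_eqF.
  have snz : s j != 0 by rewrite gt_eqF.
  have -> : T = ka * ((c + 1) / (c - 1) * (al j * T / (al j * s j))) * s j.
    by rewrite /ka; field; rewrite snz alnz c1 c2.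
  apply: ler_wpM2r; first exact: ltW (spos j).
  by apply: ler_wpM2l; first exact: ltW ka0.
have Glam : forall i, Num.sqrt (\sum_j (xb i j / s j) ^+ 2) <= ka * lambda.
  move=> i; case iI: (i \in I); last first.
    rewrite big1 => [|j _]; last by rewrite xbE iI mul0r expr0n.
    by rewrite sqrtr0; exact: mulr_ge0 (ltW ka0) Hl0.
  have H := Hlam i.
  rewrite (eq_bigr (fun j => (xb i j / s j) ^+ 2)) in H; last first.
    move=> j _; rewrite epsE epsN xbE iI.
    have alnz : al j != 0 by rewrite gt_eqF.
    have snz : s j != 0 by rewrite gt_eqF.
    by field; rewrite snz alnz.
  move: H; set Q := Num.sqrt _; move=> H.
  have -> : Q = ka * ((c + 1) / (c - 1) * Q) by rewrite /ka; field; rewrite c1 c2.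
  by apply: ler_wpM2l; first exact: ltW ka0.
have lpos : 0 < lambda.
  have [i iI ne] := Heps j0.
  have h : 0 < Num.sqrt (\sum_j (xb i j / s j) ^+ 2).
    rewrite sqrtr_gt0 (bigD1 j0) //=.
    have h1 : 0 < (xb i j0 / s j0) ^+ 2.
      rewrite lt_def sqr_ge0 andbT sqrf_eq0 mulf_eq0 invr_eq0 (gt_eqF (spos j0)) orbF xbE iI.
      by apply: contra ne; rewrite epsE => /eqP ->; rewrite mulr0.
    have h2 : 0 <= \sum_(j | j != j0) (xb i j / s j) ^+ 2.
      by apply: sumr_ge0 => k _; exact: sqr_ge0.
    lra.
  have := lt_le_trans h (Glam i); rewrite pmulr_rgt0 //.
have MDE : forall i j, MD i j = \sum_k Xs i k * DB k j - DT i j.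
  move=> i j; rewrite /MD /Mmat mul_row_col mulNmx mul1mx.
  by rewrite [LHS]mxE [X in _ + X]mxE [X in X - _]mxE.
have xbM : Xs *m Bstar Sigma - ThetaBar I X E Sigma = xb.
  by rewrite /xb /xibar /ThetaBar /xi opprD addrA.
have fitE : Xs *m Bh - Th = xb + MD.
  rewrite /MD /Mmat mul_row_col mulNmx mul1mx -xbM /DB /DT mulmxBr.
  by apply/matrixP => i j; rewrite !mxE; ring.
pose G j := \sum_k DB k j * (\sum_i xb i j * Xs i k).
pose Xj j := \sum_i xb i j * DT i j.
have colE : forall j, \sum_i xb i j * MD i j = G j - Xj j.
  move=> j; rewrite (eq_bigr (fun i => \sum_k xb i j * Xs i k * DB k j - xb i j * DT i j)); last first.
    move=> i _; rewrite MDE mulrBr mulr_sumr; congr (_ - _).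
    by apply: eq_bigr => k _; rewrite mulrA.
  rewrite sumrB exchange_big /=; congr (_ - _).
  by apply: eq_bigr => k _; rewrite mulr_sumr; apply: eq_bigr => i _; rewrite mulrC.
have colB : forall j, `|G j| <= ka * (lambda * gamma) * s j * colnorm1 DB j.
  move=> j; rewrite /colnorm1 mulr_sumr; apply: le_trans (ler_norm_sum _ _ _) _.
  apply: ler_sum => k _; rewrite normrM; case: (eqVneq k j) => [->|kj].
    by rewrite DBd normr0 mul0r mulr0.
  by rewrite mulrC; apply: ler_wpM2r; [exact: normr_ge0 | exact: Glg].
have rowB : forall i (t : 'I_p -> R) tau, 0 <= tau -> (forall j, `|t j| <= tau) ->
    \sum_j xb i j / s j * (t j * DT i j) <=
    ka * lambda * tau * (if i \in I then rownorm2 DT i else 0).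
  move=> i t tau tau0 ht; case iI: (i \in I); last first.
    by rewrite mulr0 big1 // => j _; rewrite xbE iI !mul0r.
  apply: le_trans (cs _ _) _.
  have h2 : Num.sqrt (\sum_j (t j * DT i j) ^+ 2) <= tau * rownorm2 DT i.
    rewrite /rownorm2 -(ger0_norm tau0) -sqrtr_sqr -sqrtrM ?sqr_ge0 //.
    rewrite ler_sqrt; last by apply: mulr_ge0; [exact: sqr_ge0 | exact: sumsq_ge0].
    rewrite mulr_sumr; apply: ler_sum => j _; rewrite exprMn.
    apply: ler_wpM2r; first exact: sqr_ge0.
    rewrite -(real_normK (num_real (t j))).
    have := ht j; have := normr_ge0 (t j); nra.
  apply: le_trans (ler_wpM2l (sqrtr_ge0 _) h2) _.
  rewrite -mulrA; apply: ler_wpM2r; last exact: Glam.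
  by apply: mulr_ge0 => //; exact: sqrtr_ge0.
have DBE : forall k j, DB k j = Bh k j - Bstar Sigma k j.
  by move=> k j; rewrite /DB [LHS]mxE [X in _ + X]mxE.
have DTE : forall i j, DT i j = Th i j - ThetaBar I X E Sigma i j.
  by move=> i j; rewrite /DT [LHS]mxE [X in _ + X]mxE.
have TBI : forall i j, i \in I -> ThetaBar I X E Sigma i j = 0.
  move=> i j iI; rewrite /ThetaBar /ThetaStar /xiO !mxE in_setC iI /= addr0.
  by rewrite big1 ?mulr0 // => k _; rewrite HEI // mul0r.
pose wI := \sum_i (if i \in I then rownorm2 DT i else 0).
have wOE : wO = \sum_i (if i \in I then 0 else rownorm2 DT i).
  rewrite /wO /norm21; apply: eq_bigr => i _; rewrite /rownorm2.
  case iI: (i \in I).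
    by rewrite big1 ?sqrtr0 // => j _; rewrite mxE in_setC iI /= expr0n.
  by congr Num.sqrt; apply: eq_bigr => j _; rewrite mxE in_setC iI.
have n21DT : norm21 DT = wI + wO.
  by rewrite wOE /norm21 -big_split; apply: eq_bigr => i _; case: (i \in I); rewrite /= ?addr0 ?add0r.
have wI0 : 0 <= wI.
  by apply: sumr_ge0 => i _; case: (i \in I) => //; exact: sqrtr_ge0.
have wO0 : 0 <= wO.
  by rewrite wOE; apply: sumr_ge0 => i _; case: (i \in I) => //; exact: sqrtr_ge0.
have PbE : Pb = \sum_k \sum_j (if k \in J j then `|DB k j| else 0).
  rewrite /Pb /norm11; apply: eq_bigr => k _; apply: eq_bigr => j _.
  by rewrite mxE; case: (k \in J j); rewrite ?normr0.
pose Qb := \sum_k \sum_j (if k \in J j then 0 else `|DB k j|).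
have N11 : norm11 DB = Pb + Qb.
  rewrite PbE /Qb /norm11 -big_split; apply: eq_bigr => k _.
  by rewrite -big_split; apply: eq_bigr => j _; case: (k \in J j); rewrite /= ?addr0 ?add0r.
have Pb0 : 0 <= Pb.
  by rewrite PbE; apply: sumr_ge0 => k _; apply: sumr_ge0 => j _; case: (k \in J j).
have Qb0 : 0 <= Qb.
  by apply: sumr_ge0 => k _; apply: sumr_ge0 => j _; case: (k \in J j).
have col1 : \sum_j colnorm1 DB j = norm11 DB.
  by rewrite /colnorm1 /norm11 exchange_big.
have Xrow : \sum_j Xj j / s j <= ka * lambda * wI.
  have E1 : \sum_j Xj j / s j = \sum_i \sum_j xb i j / s j * (1 * DT i j).
    rewrite /Xj; under eq_bigr => j _ do rewrite mulr_suml.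
    rewrite exchange_big /=; apply: eq_bigr => i _; apply: eq_bigr => j _.
    by rewrite mul1r mulrAC.
  rewrite E1 /wI mulr_sumr; apply: ler_sum => i _.
  have := rowB i (fun=> 1) 1 ler01 (fun j => ltac:(by rewrite normr1)).
  by rewrite mulr1.
have Gl : forall j, - (ka * (lambda * gamma) * colnorm1 DB j) <= G j / s j.
  move=> j; have := colB j; have sj := spos j.
  rewrite ler_pdivlMr // ler_norml => /andP [h _].
  by rewrite mulNr -mulrAC.
have H := Hmin (Bstar Sigma) (ThetaBar I X E Sigma) Bd.
rewrite /Fobj -/Xs fitE xbM in H.
have low : \sum_j (s j + (\sum_i xb i j * MD i j) / s j) <= norm21T (xb + MD).
  rewrite /norm21T; apply: ler_sum => j _.
  have -> : colnorm2 (xb + MD) j = Num.sqrt (\sum_i (xb i j + MD i j) ^+ 2).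
    by rewrite /colnorm2; congr Num.sqrt; apply: eq_bigr => i _; rewrite mxE.
  exact: lowb (spos j).
rewrite big_split /= in low.
have Ls : - (ka * (lambda * gamma) * norm11 DB) - ka * lambda * wI <=
          \sum_j (\sum_i xb i j * MD i j) / s j.
  rewrite (eq_bigr (fun j => G j / s j - Xj j / s j)) => [|j _]; last by rewrite colE mulrBl.
  rewrite sumrB.
  have hG : \sum_j - (ka * (lambda * gamma) * colnorm1 DB j) <= \sum_j G j / s j.
    by apply: ler_sum => j _; exact: Gl.
  rewrite sumrN -mulr_sumr col1 in hG.
  move: Xrow; lra.
have TBb : norm21 (ThetaBar I X E Sigma) - norm21 Th <= wO - wI.
  rewrite wOE /wI /norm21 -!sumrB; apply: ler_sum => i _.
  case iI: (i \in I).
    have e1 : rownorm2 (ThetaBar I X E Sigma) i = 0.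
      by rewrite /rownorm2 big1 ?sqrtr0 // => j _; rewrite TBI // expr0n.
    have e2 : rownorm2 Th i = rownorm2 DT i.
      by rewrite /rownorm2; congr Num.sqrt; apply: eq_bigr => j _; rewrite DTE TBI // subr0.
    by rewrite e1 e2 sub0r.
  have := tri (fun j => - DT i j) (fun j => Th i j).
  have e1 : \sum_j (- DT i j + Th i j) ^+ 2 = \sum_j ThetaBar I X E Sigma i j ^+ 2.
    by apply: eq_bigr => j _; rewrite DTE opprB subrK.
  have e2 : \sum_j (- DT i j) ^+ 2 = \sum_j DT i j ^+ 2.
    by apply: eq_bigr => j _; rewrite sqrrN.
  rewrite e1 e2 -/(rownorm2 _ i) -/(rownorm2 DT i) -/(rownorm2 Th i) subr0.
  rewrite -/(rownorm2 (ThetaBar I X E Sigma) i); lra.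
have B11 : norm11 (Bstar Sigma) - norm11 Bh <= Pb - Qb.
  rewrite PbE /Qb /norm11 -!sumrB; apply: ler_sum => k _.
  rewrite -!sumrB; apply: ler_sum => j _.
  case kJ: (k \in J j).
    by rewrite DBE distrC subr0; exact: lerB_dist.
  by rewrite DBE (HJ k j) ?kJ // subr0 normr0 sub0r.
have cone0 : 0 <= lambda * ((1 + ka) * (gamma * Pb + wO) - (1 - ka) * (gamma * Qb + wI)).
  have h1 := ler_wpM2l (ltW lpos) TBb.
  have h2 := ler_wpM2l (mulr_ge0 (ltW lpos) Hg0) B11.
  rewrite N11 in Ls.
  have e0 : \sum_j s j = \sum_j colnorm2 xb j by [].
  move: H low Ls h1 h2; rewrite /norm21T e0.
  set LS1 := \sum_(i < p) _ / _.
  have h3 : 0 <= ka * lambda * wO by rewrite mulr_ge0 // mulr_ge0 // ltW.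
  lra.
have e : (1 + ka) * (gamma * Pb + wO) - (1 - ka) * (gamma * Qb + wI) =
         2 / (c + 1) * (c * (gamma * Pb + wO) - (gamma * Qb + wI)).
  by rewrite /ka; field; rewrite c2.
have c3 : 0 < 2 / (c + 1) by rewrite divr_gt0 //; lra.
rewrite e pmulr_rge0 // pmulr_rge0 // subr_ge0 in cone0.
pose u j := `|\sum_i V i j * DT i j|.
pose pj j := \sum_k (if k \in J j then `|DB k j| else 0).
have pj0 : forall j, 0 <= pj j.
  by move=> j; apply: sumr_ge0 => k _; case: (k \in J j).
have cn0 : forall j, 0 <= colnorm1 DB j.
  by move=> j; apply: sumr_ge0 => k _; exact: normr_ge0.
have perj : forall j,
  -2 * \sum_i xb i j * MD i j -
    2 * lambda * colnorm2 xb j * \sum_i V i j * DT i j +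
    2 * lambda * gamma * colnorm2 xb j *
    (\sum_(k | k != j) `|Bstar Sigma k j| - \sum_(k | k != j) `|Bh k j|) +
    lambda ^+ 2 * (gamma * colnorm1 DB j + `|\sum_i V i j * DT i j|) ^+ 2
  <= 2 * ka * lambda * gamma * m * colnorm1 DB j + 2 * Xj j + 2 * lambda * m * u j
     + 2 * lambda * gamma * m * pj j + lambda ^+ 2 * (gamma * colnorm1 DB j + u j) ^+ 2.
  move=> j; rewrite -/(s j) -/(u j) colE.
  have f1 : - G j <= ka * (lambda * gamma) * m * colnorm1 DB j.
    have := colB j; rewrite ler_norml => /andP [h _].
    have : ka * (lambda * gamma) * s j * colnorm1 DB j <= ka * (lambda * gamma) * m * colnorm1 DB j.
      apply: ler_wpM2r; first exact: cn0.
      apply: ler_wpM2l; last exact: sm.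
      exact: mulr_ge0 (ltW ka0) (mulr_ge0 Hl0 Hg0).
    lra.
  have f2 : - (s j * \sum_i V i j * DT i j) <= m * u j.
    apply: le_trans (_ : s j * u j <= _).
      by rewrite -mulrN ler_wpM2l ?(ltW (spos j)) // /u -normrN ler_norm.
    by apply: ler_wpM2r; [exact: normr_ge0 | exact: sm].
  have f3 : s j * (\sum_(k | k != j) `|Bstar Sigma k j| - \sum_(k | k != j) `|Bh k j|)
            <= m * pj j.
    have d : \sum_(k | k != j) `|Bstar Sigma k j| - \sum_(k | k != j) `|Bh k j| <= pj j.
      rewrite -sumrB; apply: le_trans (_ : \sum_(k | k != j) (if k \in J j then `|DB k j| else 0) <= _).
        apply: ler_sum => k _; case kJ: (k \in J j).
          by rewrite DBE distrC; exact: lerB_dist.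
        by rewrite (HJ k j) ?kJ // normr0 sub0r oppr_le0.
      rewrite /pj [X in _ <= X](bigD1 j) //= lerDr.
      by case: (j \in J j).
    apply: le_trans (_ : s j * pj j <= _).
      by apply: ler_wpM2l => //; exact: ltW.
    by apply: ler_wpM2r; [exact: pj0 | exact: sm].
  have g2 := ler_wpM2l (mulr_ge0 (ler0n R 2) (ltW lpos)) f2.
  have g3 := ler_wpM2l (mulr_ge0 (mulr_ge0 (ler0n R 2) (ltW lpos)) Hg0) f3.
  move: f1 g2 g3; lra.
have nF : normF MD ^+ 2 = \sum_j colnorm2 MD j ^+ 2.
  rewrite /normF sqr_sqrtr; last by apply: sumr_ge0 => i _; exact: sumsq_ge0.
  rewrite exchange_big; apply: eq_bigr => j _.
  by rewrite /colnorm2 sqr_sqrtr // sumsq_ge0.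
have sumX : \sum_j Xj j <= ka * lambda * m * wI.
  have E1 : \sum_j Xj j = \sum_i \sum_j xb i j / s j * (s j * DT i j).
    rewrite /Xj exchange_big /=; apply: eq_bigr => i _; apply: eq_bigr => j _.
    by rewrite mulrA mulfVK // gt_eqF.
  rewrite E1 /wI mulr_sumr; apply: ler_sum => i _.
  apply: rowB => // j; rewrite ger0_norm ?(ltW (spos j)) //; exact: sm.
have sumU : \sum_j u j <= wI + wO.
  rewrite -n21DT /u.
  apply: le_trans (_ : \sum_j \sum_i `|V i j| * `|DT i j| <= _).
    apply: ler_sum => j _; apply: le_trans (ler_norm_sum _ _ _) _.
    by apply: ler_sum => i _; rewrite normrM.
  rewrite exchange_big /norm21; apply: ler_sum => i _.
  apply: le_trans (cs_abs _ _) _.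
  rewrite -/(rownorm2 V i) -/(rownorm2 DT i).
  rewrite -[X in _ <= X]mul1r; apply: ler_wpM2r; last exact: HVn.
  exact: sqrtr_ge0.
have sumP : \sum_j pj j = Pb.
  by rewrite PbE /pj exchange_big.
have u0 : forall j, 0 <= u j by move=> j; exact: normr_ge0.
have sumQ : \sum_j (gamma * colnorm1 DB j + u j) ^+ 2 <=
            (gamma * (Pb + Qb) + (wI + wO)) ^+ 2.
  apply: le_trans (sumsq_le_sqsum _) _.
    by move=> j; rewrite addr_ge0 ?mulr_ge0.
  rewrite big_split /= -mulr_sumr col1 N11.
  have h0 : 0 <= gamma * (Pb + Qb) + \sum_j u j.
    by rewrite addr_ge0 ?mulr_ge0 ?addr_ge0 // sumr_ge0.
  have h1 : gamma * (Pb + Qb) + \sum_j u j <= gamma * (Pb + Qb) + (wI + wO) by lra.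
  exact: sq_mono.
rewrite nF.
apply: le_trans (ler_sum _ (fun j _ => HVj j)) _.
apply: le_trans (ler_sum _ (fun j _ => perj j)) _.
rewrite !big_split /= -!mulr_sumr col1 N11 sumP.
have kaE : ka * (c + 1) = c - 1 by rewrite /ka; field; rewrite c2.
exact: (final_arith ka0 Hl0 Hg0 m0 Pb0 Qb0 wI0 wO0 Hc kaE cone0 sumX sumU sumQ).
Qed.
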